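(* Assume $S\times M\neq\emptyset$, let $(x,\lambda):[t_0,+\infty[\ \to X\times Y$ be a solution of (AHT), and suppose there exists $t_+\ge t_0$ such that $\varepsilon^2(t)+\dot\varepsilon(t)\ge0$ and $2\varepsilon(t)\dot\varepsilon(t)+\ddot\varepsilon(t)\le0$ for all $t\ge t_+$. Then \[ \|(\dot x(t),\dot\lambda(t))\|^2=\mathcal{O}\big(e^{-2\rho(t)}+\varepsilon^2(t)\big)\quad\text{as } t\to+\infty. \]
   Context: $X,Y$ are real Hilbert spaces; $X\times Y$ carries the product inner product and norm $\|\cdot\|$. Standing assumptions: $f:X\to\mathbb{R}$ is convex and continuously differentiable with $\nabla f$ Lipschitz continuous on bounded subsets of $X$; $A:X\to Y$ is linear and continuous with adjoint $A^*$; $b\in Y$; $\varepsilon:[t_0,+\infty[\ \to\ ]0,+\infty[$ ($t_0\ge0$) is twice continuously differentiable with $\lim_{t\to+\infty}\varepsilon(t)=0$. $L(x,\lambda)=f(x)+\langle\lambda,Ax-b\rangle_Y$. $S$ is the set of optimal solutions of $\min\{f(x):Ax=b\}$, $M$ the set of Lagrange multipliers; $S\times M$ is the set of saddle points of $L$. $\rho(t)=\int_{t_0}^t\varepsilon(\tau)\,d\tau$. (AHT) is the system $\dot x+\nabla f(x)+A^*\lambda+\varepsilon(t)x=0$, $\dot\lambda+b-Ax+\varepsilon(t)\lambda=0$; a solution is a continuously differentiable $(x,\lambda):[t_0,+\infty[\ \to X\times Y$ satisfying it on $[t_0,+\infty[$ (existence and uniqueness for every initial datum is assumed). *)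

(* Defs.v *)
From HB Require Import structures.
From mathcomp Require Import all_boot all_order all_algebra.
From mathcomp Require Import all_classical all_reals all_analysis.
Set Implicit Arguments. Unset Strict Implicit. Unset Printing Implicit Defensive.
Import Order.TTheory GRing.Theory Num.Theory.
Import numFieldNormedType.Exports.
Local Open Scope classical_set_scope.
Local Open Scope ring_scope.

(* A real Hilbert space is modelled as a complete normed space X over R
   together with an inner product ip : X -> X -> R inducing its norm. *)
Definition is_inner_product {R : realType} (X : normedModType R)
  (ip : X -> X -> R) : Prop :=
  [/\ forall x y, ip x y = ip y x,
      forall (a : R) (x y z : X), ip (a *: x + y) z = a * ip x z + ip y z
    & forall x, ip x x = `|x| ^+ 2].

Definition convex_fun {R : realType} (X : normedModType R) (f : X -> R) : Prop :=
  forall (x y : X) (s : R), 0 <= s <= 1 ->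
    f (s *: x + (1 - s) *: y) <= s * f x + (1 - s) * f y.

Definition is_gradient {R : realType} (X : normedModType R)
  (ip : X -> X -> R) (f : X -> R) (g : X -> X) : Prop :=
  forall x : X, differentiable f x /\ (forall h : X, 'd f x h = ip (g x) h).

Definition lipschitz_on_bounded {R : realType} (X : normedModType R)
  (g : X -> X) : Prop :=
  forall r : R, exists L : R, forall x y : X,
    `|x| <= r -> `|y| <= r -> `|g x - g y| <= L * `|x - y|.

Definition lagrangian {R : realType} (X Y : normedModType R)
  (ipY : Y -> Y -> R) (f : X -> R) (A : X -> Y) (b : Y) (x : X) (lam : Y) : R :=
  f x + ipY lam (A x - b).

(* (xs, ls) is a saddle point of L, i.e. an element of S x M *)
Definition saddle_point {R : realType} (X Y : normedModType R)
  (ipY : Y -> Y -> R) (f : X -> R) (A : X -> Y) (b : Y) (xs : X) (ls : Y) : Prop :=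
  forall (x : X) (mu : Y),
    lagrangian ipY f A b xs mu <= lagrangian ipY f A b xs ls /\
    lagrangian ipY f A b xs ls <= lagrangian ipY f A b x ls.

Definition rho {R : realType} (eps : R -> R) (t0 t : R) : R :=
  \int[lebesgue_measure]_(s in `[t0, t]) eps s.

(* The filter t --> +oo on R, packed as a filter_on so that it can be used
   with the Landau notation f =O_F g. *)
Definition pinfty_filter (R : realType) : filter_on R :=
  FilterType (pinfty_nbhs R) (@proper_pinfty_nbhs R).

(* Main.v *)
Require Import Defs.
From HB Require Import structures.
From mathcomp Require Import all_boot all_order all_algebra.
From mathcomp Require Import all_classical all_reals all_analysis.
From mathcomp Require Import ring lra.
Import Order.TTheory GRing.Theory Num.Theory.
Import numFieldNormedType.Exports.
Local Open Scope classical_set_scope.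
Local Open Scope ring_scope.
Set Implicit Arguments. Unset Strict Implicit. Unset Printing Implicit Defensive.

Section IP.
Context {R : realType} {V : normedModType R} (ip : V -> V -> R)
  (Hip : is_inner_product ip).

Lemma ipC x y : ip x y = ip y x. Proof. by case: Hip. Qed.
Lemma ipxx x : ip x x = `|x| ^+ 2. Proof. by case: Hip. Qed.
Lemma ipDZl a x y z : ip (a *: x + y) z = a * ip x z + ip y z.
Proof. by case: Hip. Qed.
Lemma ip0l z : ip 0 z = 0.
Proof. have := ipDZl 1 0 0 z; rewrite scaler0 add0r mul1r; lra. Qed.
Lemma ipDl x y z : ip (x + y) z = ip x z + ip y z.
Proof. by rewrite -[x in LHS]scale1r ipDZl mul1r. Qed.
Lemma ipZl a x z : ip (a *: x) z = a * ip x z.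
Proof. by rewrite -[_ *: x]addr0 ipDZl ip0l addr0. Qed.
Lemma ipNl x z : ip (- x) z = - ip x z.
Proof. by rewrite -scaleN1r ipZl mulN1r. Qed.
Lemma ipBl x y z : ip (x - y) z = ip x z - ip y z.
Proof. by rewrite ipDl ipNl. Qed.
Lemma ip0r z : ip z 0 = 0. Proof. by rewrite ipC ip0l. Qed.
Lemma ipDr x y z : ip z (x + y) = ip z x + ip z y.
Proof. by rewrite ipC ipDl !(ipC z). Qed.
Lemma ipZr a x z : ip z (a *: x) = a * ip z x.
Proof. by rewrite ipC ipZl ipC. Qed.
Lemma ipNr x z : ip z (- x) = - ip z x.
Proof. by rewrite ipC ipNl ipC. Qed.
Lemma ipBr x y z : ip z (x - y) = ip z x - ip z y.
Proof. by rewrite ipDr ipNr. Qed.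

Lemma ip_polar a b : ip a b = (`|a + b| ^+ 2 - `|a| ^+ 2 - `|b| ^+ 2) / 2.
Proof.
rewrite -!ipxx ipDl !ipDr (ipC b a).
by field.
Qed.

Lemma ip_ge0 x : 0 <= ip x x. Proof. by rewrite ipxx sqr_ge0. Qed.

Lemma ip_le a b : 2 * ip a b <= `|a| ^+ 2 + `|b| ^+ 2.
Proof.
have := ip_ge0 (a - b); rewrite ipBl !ipBr (ipC b a) !ipxx.
move=> H; rewrite -subr_ge0; apply: le_trans H _; rewrite le_eqVlt; apply/orP; left; apply/eqP.
ring.
Qed.

Lemma cvg_ip {T : Type} {F : set_system T} {FF : Filter F} (f g : T -> V) a b :
  f x @[x --> F] --> a -> g x @[x --> F] --> b ->
  ip (f x) (g x) @[x --> F] --> ip a b.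
Proof.
move=> fa gb.
have -> : (fun x => ip (f x) (g x)) =
   (fun x => (`|f x + g x| * `|f x + g x| - `|f x| * `|f x| - `|g x| * `|g x|) / 2).
  by apply/funext => x; rewrite ip_polar !expr2.
rewrite ip_polar !expr2.
apply: cvgM; last exact: cvg_cst.
apply: cvgB; [apply: cvgB|].
- by apply: cvgM; apply: cvg_norm; apply: cvgD.
- by apply: cvgM; apply: cvg_norm.
- by apply: cvgM; apply: cvg_norm.
Qed.

Lemma ip_split a v : ip (a + v) (a + v) = ip a a + 2 * ip a v + ip v v.
Proof. by rewrite ipDl !ipDr (ipC v a); ring. Qed.

End IP.


Lemma shift_cvg {R : realType} (t : R) : (fun h : R => h *: (1:R) + t) @ 0^' --> t.
Proof.
apply: cvg_within_filter.
suff : (fun h : R => h *: (1:R) + t) @ 0 --> (0 *: (1:R) + t) by rewrite scale0r add0r.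
apply: cvgD; last exact: cvg_cst.
apply: cvgZl. exact: cvg_id.
Qed.

Lemma derivable_cont {R : realType} {V : normedModType R} (k : R -> V) t :
  derivable k t 1 -> (fun h : R => k (h *: 1 + t)) @ 0^' --> k t.
Proof.
move=> /derivable1_diffP /differentiable_continuous kc.
exact: (cvg_comp _ _ (@shift_cvg _ t) kc).
Qed.


Section DerIP.
Context {R : realType} {V : normedModType R} (ip : V -> V -> R)
  (Hip : is_inner_product ip).

Lemma derivable_cvg (g : R -> V) t : derivable g t 1 ->
  (fun h : R => h^-1 *: (g (h *: 1 + t) - g t)) @ 0^' --> derive1 g t.
Proof. by move=> dg; rewrite derive1E; exact: dg. Qed.

Lemma is_derive_ip (g k : R -> V) t : derivable g t 1 -> derivable k t 1 ->
  is_derive t 1 (fun s => ip (g s) (k s)) (ip (derive1 g t) (k t) + ip (g t) (derive1 k t)).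
Proof.
move=> dg dk.
have H : (fun h : R => h^-1 *: ((fun s => ip (g s) (k s)) (h *: 1 + t) - ip (g t) (k t)))
   @ 0^' --> (ip (derive1 g t) (k t) + ip (g t) (derive1 k t)).
  have -> : (fun h : R => h^-1 *: ((fun s => ip (g s) (k s)) (h *: 1 + t) - ip (g t) (k t)))
     = (fun h : R => ip (h^-1 *: (g (h *: 1 + t) - g t)) (k (h *: 1 + t))
                   + ip (g t) (h^-1 *: (k (h *: 1 + t) - k t))).
    apply/funext => h /=.
    rewrite (ipZl Hip) (ipZr Hip) (ipBl Hip) (ipBr Hip).
    rewrite -mulrDr; congr (_ * _); ring.
  apply: cvgD.
  - apply: (cvg_ip Hip); [exact: derivable_cvg | exact: derivable_cont].
  - apply: (cvg_ip Hip); [exact: cvg_cst | exact: derivable_cvg].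
apply: DeriveDef.
- by apply/cvg_ex; eexists; exact: H.
- exact: (cvg_lim (@Rhausdorff R) H).
Qed.


Lemma is_derive_ip2 (g k : R -> V) (t : R) (dg dk : V) : is_derive t 1 g dg -> is_derive t 1 k dk ->
  is_derive t 1 (fun s => ip (g s) (k s)) (ip dg (k t) + ip (g t) dk).
Proof.
move=> Hg Hk.
have := is_derive_ip (@ex_derive _ _ _ _ _ _ _ Hg) (@ex_derive _ _ _ _ _ _ _ Hk).
by rewrite !derive1E !derive_val.
Qed.

End DerIP.

Lemma is_derive_shiftc {R : realType} {V : normedModType R} (g : R -> V) (h t : R) (dg : V) :
  is_derive (t + h) 1 g dg -> is_derive t 1 (fun s => g (s + h)) dg.
Proof.
move=> Hg.
have E : (fun k : R => k^-1 *: (((fun s => g (s + h)) \o shift t) (k *: 1) - g (t + h)))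
  = (fun k : R => k^-1 *: ((g \o shift (t + h)) (k *: 1) - g (t + h))).
  by apply/funext => k /=; rewrite addrA.
apply: DeriveDef.
- rewrite /derivable E; exact: (@ex_derive _ _ _ _ _ _ _ Hg).
- rewrite /derive E; exact: (@derive_val _ _ _ _ _ _ _ Hg).
Qed.



Lemma cvg_dnbhs_right {R : realType} {W : normedModType R} (f : R -> W) l :
  f x @[x --> (0:R)^'] --> (l:W) -> f x @[x --> (0:R)^'+] --> l.
Proof.
move=> H; apply: cvg_trans H; move=> A [e e0 HA]; exists e => // y ye y0.
by apply: HA => //; rewrite gt_eqF.
Qed.

Section Conv.
Context {R : realType} {V : normedModType R} (ip : V -> V -> R)
  (Hip : is_inner_product ip) (f : V -> R) (g : V -> V)
  (Hc : convex_fun f) (Hg : is_gradient ip f g).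

Lemma grad_ineq x y : f x + ip (g x) (y - x) <= f y.
Proof.
set v := y - x.
have dv : derivable f x v by apply: diff_derivable; case: (Hg x).
have Dv : 'D_v f x = ip (g x) v.
  by case: (Hg x) => d1 d2; rewrite deriveE // d2.
have C : (fun h : R => h^-1 *: ((f \o shift x) (h *: v) - f x)) @ 0^' --> 'D_v f x := dv.
have C' := cvg_dnbhs_right C.
rewrite -lerBrDl -Dv.
apply: (closed_cvg _ (@closed_le _ (f y - f x)) _ _ C').
near=> h.
have h0 : 0 < h by near: h; exact: nbhs_right_gt.
have h1 : h < 1 by near: h; exact: nbhs_right_lt.
rewrite /= -[h^-1 *: _]/(h^-1 * _) mulrC -/(_ / h) ler_pdivrMr //.
have -> : h *: v + x = h *: y + (1 - h) *: x.
  by rewrite /v scalerBr scalerBl scale1r -addrA; congr (_ + _); rewrite addrC.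
have H : f (h *: y + (1 - h) *: x) <= h * f y + (1 - h) * f x by apply: Hc; rewrite (ltW h0) (ltW h1).
lra.
Unshelve. all: by end_near.
Qed.

Lemma grad_mono x y : 0 <= ip (g x - g y) (x - y).
Proof.
have H1 := grad_ineq x y; have H2 := grad_ineq y x.
have E : ip (g x) (x - y) = - ip (g x) (y - x).
  by rewrite -(ipNr Hip) opprB.
rewrite (ipBl Hip); lra.
Qed.

End Conv.


Section F.
Context {R : realType}.

Lemma is_derive_expR_comp (a : R -> R) (da t : R) : is_derive t 1 a da ->
  is_derive t 1 (fun s => expR (a s)) (expR (a t) * da).
Proof.
move=> Ha.
have d1 : derivable a t 1 by [].
have d2 : derivable (@expR R) (a t) 1 by exact: derivable_expR.
have dc : derivable (expR \o a) t 1.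
  apply/derivable1_diffP; apply: differentiable_comp; exact/derivable1_diffP.
apply: DeriveDef; first exact: dc.
rewrite -derive1E (derive1_comp d1 d2) !derive1E (derive_val (f:=a)).
have E : 'D_1 expR (a t) = expR (a t) by apply: derive_val.
by rewrite E mulrC.
Qed.

Lemma FTC_at (phi : R -> R) (t0 t : R) : t0 < t ->
  (forall s, t0 <= s -> {for s, continuous phi}) ->
  is_derive t 1 (fun s => \int[lebesgue_measure]_(u in `[t0, s]) phi u) (phi t).
Proof.
move=> tt0 cphi.
have int : lebesgue_measure.-integrable `[t0, t + 1] (EFin \o phi).
  apply: continuous_compact_integrable; first exact: segment_compact.
  apply: continuous_in_subspaceT => s; rewrite inE /= in_itv /= => /andP[s0 _].
  exact: cphi.
have t1 : t < t + 1 by rewrite ltrDl.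
have [d e] := continuous_FTC1_closed t1 int tt0 (cphi t (ltW tt0)).
apply: DeriveDef; first exact: d.
by rewrite -derive1E e.
Qed.

Lemma derivable_contR (f : R -> R) t : derivable f t 1 -> {for t, continuous f}.
Proof. by move=> /derivable1_diffP /differentiable_continuous. Qed.

Lemma comparison (phi a dphi da : R -> R) (s : R) :
 (forall t, s <= t -> is_derive t 1 phi (dphi t)) ->
 (forall t, s <= t -> is_derive t 1 a (da t)) ->
 (forall t, s <= t -> dphi t <= - (da t * phi t)) ->
 forall t, s <= t -> phi t * expR (a t) <= phi s * expR (a s).
Proof.
move=> dp dA ineq t st.
set psi := fun u => phi u * expR (a u).
have D u : s <= u -> is_derive u 1 psi (phi u * (expR (a u) * da u) + expR (a u) * dphi u).
  move=> su; have := is_deriveM (dp u su) (is_derive_expR_comp (dA u su)).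
  by [].
apply: (@ler0_derive1_nincr R psi s t _ _ _ s t) => //.
- move=> u; rewrite in_itv /= => /andP[su _].
  by have := D u (ltW su).
- move=> u; rewrite in_itv /= => /andP[su _].
  have Du := D u (ltW su).
  rewrite derive1E derive_val.
  have e0 := expR_gt0 (a u).
  have := ineq u (ltW su).
  move=> H.
  have -> : phi u * (expR (a u) * da u) + expR (a u) * dphi u =
     expR (a u) * (dphi u + da u * phi u) by ring.
  apply: mulr_ge0_le0; first exact: ltW.
  lra.
- apply: continuous_in_subspaceT => u; rewrite inE /= in_itv /= => /andP[su _].
  apply: derivable_contR.
  by have := D u su.
Qed.

End F.


Section Key.
Context {R : realType} {X Y : normedModType R} (ipX : X -> X -> R) (ipY : Y -> Y -> R)
  (HX : is_inner_product ipX) (HY : is_inner_product ipY)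
  (f : X -> R) (gradf : X -> X) (Hc : convex_fun f) (Hg : is_gradient ipX f gradf)
  (A : {linear X -> Y}) (Astar : Y -> X)
  (Hadj : forall (u : X) (v : Y), ipY (A u) v = ipX u (Astar v)) (b : Y).

Definition vx (x : X) (l : Y) (e : R) := - (gradf x + Astar l + e *: x).
Definition vl (x : X) (l : Y) (e : R) := A x - b - e *: l.

Lemma key x0 x1 l0 l1 e0 e1 :
  ipX (vx x1 l1 e1 - vx x0 l0 e0) (x1 - x0) + ipY (vl x1 l1 e1 - vl x0 l0 e0) (l1 - l0)
  <= - ((e1 + e0) / 2) * (ipX (x1 - x0) (x1 - x0) + ipY (l1 - l0) (l1 - l0))
     - ((e1 - e0) / 2) * ((ipX x1 x1 + ipY l1 l1) - (ipX x0 x0 + ipY l0 l0)).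
Proof.
have G := grad_mono HX Hc Hg x1 x0.
rewrite (ipBl HX) in G.
have A1 : ipX (Astar l1) (x1 - x0) = ipY (A (x1 - x0)) l1 by rewrite Hadj (ipC HX).
have A0 : ipX (Astar l0) (x1 - x0) = ipY (A (x1 - x0)) l0 by rewrite Hadj (ipC HX).
have AY : ipY (A x1) (l1 - l0) - ipY (A x0) (l1 - l0) = ipY (A (x1 - x0)) l1 - ipY (A (x1 - x0)) l0.
  by rewrite -(ipBl HY) -linearB (ipBr HY).
rewrite /vx /vl.
rewrite !(ipBl HX, ipDl HX, ipNl HX, ipZl HX, ipBl HY, ipDl HY, ipNl HY, ipZl HY).
rewrite A1 A0.
rewrite !(ipBr HX, ipBr HY, ipBl HX, ipBl HY) (ipC HX x0 x1) (ipC HY l0 l1).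
move: AY G; rewrite !(ipBr HY, ipBr HX) => AY G.
lra.
Qed.

Lemma saddle_Ab xs ls : saddle_point ipY f A b xs ls -> A xs = b.
Proof.
move=> S; have [H _] := S xs (ls + (A xs - b)).
move: H; rewrite /lagrangian (ipDl HY) => H.
have H2 : ipY (A xs - b) (A xs - b) <= 0 by lra.
apply/eqP; rewrite -subr_eq0 -normr_eq0.
have H3 : `|A xs - b| ^+ 2 <= 0 by rewrite -(ipxx HY).
have H4 : 0 <= `|A xs - b| ^+ 2 by exact: sqr_ge0.
have : `|A xs - b| ^+ 2 == 0 by rewrite eq_le H3 H4.
by rewrite sqrf_eq0.
Qed.

Lemma bnd_ineq x l xs ls e : saddle_point ipY f A b xs ls -> 0 <= e ->
  ipX (vx x l e) (x - xs) + ipY (vl x l e) (l - ls) <=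
  - e * ((ipX (x - xs) (x - xs) + ipY (l - ls) (l - ls)) / 2 - (ipX xs xs + ipY ls ls) / 2).
Proof.
move=> S e0.
have Ab := saddle_Ab S.
have Gi := grad_ineq Hc Hg x xs.
have [_ L] := S x ls.
move: L; rewrite /lagrangian Ab subrr (ip0r HY) addr0 => L.
have A1 : ipX (Astar l) (x - xs) = ipY (A x) l - ipY b l.
  by rewrite (ipC HX) -Hadj linearB Ab (ipBl HY).
have P : 0 <= e * (ipX x x + ipY l l).
  by apply: mulr_ge0 => //; apply: addr_ge0; apply: ip_ge0.
rewrite /vx /vl.
rewrite !(ipBl HX, ipDl HX, ipNl HX, ipZl HX, ipBl HY, ipDl HY, ipNl HY, ipZl HY).
rewrite A1.
move: Gi L; rewrite !(ipBr HX, ipBr HY, ipBl HX, ipBl HY) (ipC HX xs x) (ipC HY ls l) (ipC HY ls (A x)) (ipC HY ls b) => Gi L.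
lra.
Qed.

End Key.


Section L.
Context {R : realType} {V : normedModType R}.

Lemma isd_add (f g : R -> V) (t : R) (df dg : V) :
  is_derive t 1 f df -> is_derive t 1 g dg -> is_derive t 1 (fun s => f s + g s) (df + dg).
Proof. move=> H1 H2; exact: is_deriveD. Qed.

Lemma isd_sub (f g : R -> V) (t : R) (df dg : V) :
  is_derive t 1 f df -> is_derive t 1 g dg -> is_derive t 1 (fun s => f s - g s) (df - dg).
Proof. move=> H1 H2; exact: is_deriveB. Qed.

Lemma isd_cst (c : V) (t : R) : is_derive t 1 (fun _ : R => c) 0.
Proof. exact: is_derive_cst. Qed.

Lemma isd_subc (f : R -> V) (c : V) (t : R) (df : V) :
  is_derive t 1 f df -> is_derive t 1 (fun s => f s - c) df.
Proof. move=> H; rewrite -[df]subr0; exact: isd_sub H (isd_cst c t). Qed.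

Lemma isd_of (f : R -> V) t : derivable f t 1 -> is_derive t 1 f (derive1 f t).
Proof. by move=> H; rewrite derive1E; exact: derivableP. Qed.

End L.

Section LR.
Context {R : realType}.

Lemma isd_mul (f g : R -> R) (t : R) (df dg : R) :
  is_derive t 1 f df -> is_derive t 1 g dg -> is_derive t 1 (fun s => f s * g s) (f t * dg + g t * df).
Proof. move=> H1 H2; exact: is_deriveM. Qed.

Lemma isd_mulc (f : R -> R) (c : R) (t : R) (df : R) :
  is_derive t 1 f df -> is_derive t 1 (fun s => f s * c) (df * c).
Proof.
move=> H; have := isd_mul H (isd_cst c t); rewrite mulr0 add0r mulrC.
by [].
Qed.

End LR.


Section Main.
Context {R : realType} {X Y : normedModType R} (ipX : X -> X -> R) (ipY : Y -> Y -> R)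
  (HX : is_inner_product ipX) (HY : is_inner_product ipY)
  (f : X -> R) (gradf : X -> X) (Hc : convex_fun f) (Hg : is_gradient ipX f gradf)
  (A : {linear X -> Y}) (Astar : Y -> X)
  (Hadj : forall (u : X) (v : Y), ipY (A u) v = ipX u (Astar v)) (b : Y)
  (eps : R -> R) (t0 : R) (x : R -> X) (lam : R -> Y) (tplus : R)
  (xs : X) (ls : Y) (Hsad : saddle_point ipY f A b xs ls)
  (Heps : forall t, t0 <= t -> 0 < eps t)
  (Hde : forall t, t0 <= t -> derivable eps t 1)
  (Hdde : forall t, t0 <= t -> derivable (derive1 eps) t 1)
  (Hdx : forall t, t0 <= t -> derivable x t 1)
  (Hdl : forall t, t0 <= t -> derivable lam t 1)
  (Ex : forall t, t0 <= t ->
     (derive1 x) t + gradf (x t) + Astar (lam t) + eps t *: x t = 0)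
  (El : forall t, t0 <= t ->
     (derive1 lam) t + b - A (x t) + eps t *: lam t = 0)
  (Htp : t0 <= tplus)
  (Hc1 : forall t, tplus <= t -> eps t ^+ 2 + (derive1 eps) t >= 0)
  (Hc2 : forall t, tplus <= t -> 2 * eps t * (derive1 eps) t + (derive1n 2 eps) t <= 0).

Let T1 := tplus + 1.
Let t0T1 : t0 < T1.
Proof. by rewrite /T1; apply: (le_lt_trans Htp); rewrite ltrDl. Qed.

Lemma Lx t : t0 <= t -> derive1 x t = vx gradf Astar (x t) (lam t) (eps t).
Proof.
move=> /Ex; rewrite /vx => /eqP; rewrite -!addrA addr_eq0 => /eqP ->.
by rewrite !addrA.
Qed.

Lemma Ll t : t0 <= t -> derive1 lam t = vl A b (x t) (lam t) (eps t).
Proof.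
move=> /El; rewrite /vl => /eqP; rewrite -!addrA addr_eq0 => /eqP ->.
by rewrite !opprD opprK addrCA.
Qed.

Definition rh t := rho eps t0 t.

Lemma rho_der t : t0 < t -> is_derive t 1 rh (eps t).
Proof.
move=> tt0; apply: FTC_at => // s s0.
exact: derivable_contR (Hde s0).
Qed.


Lemma rho_mono s t : t0 < s -> s <= t -> rh s <= rh t.
Proof.
move=> s0 st.
apply: (@ger0_derive1_ndecr R rh s t _ _ _ s t) => //.
- move=> u; rewrite in_itv /= => /andP[su _].
  by have := rho_der (lt_trans s0 su).
- move=> u; rewrite in_itv /= => /andP[su _].
  have D := rho_der (lt_trans s0 su).
  rewrite derive1E derive_val; apply: ltW; apply: Heps.
  exact: ltW (lt_trans s0 su).
- apply: continuous_in_subspaceT => u; rewrite inE /= in_itv /= => /andP[su _].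
  apply: derivable_contR.
  by have := rho_der (lt_le_trans s0 su).
Qed.

Lemma isd_x t : t0 <= t -> is_derive t 1 x (derive1 x t).
Proof. by move=> /Hdx; exact: isd_of. Qed.
Lemma isd_l t : t0 <= t -> is_derive t 1 lam (derive1 lam t).
Proof. by move=> /Hdl; exact: isd_of. Qed.

Lemma bounded : exists B, forall t, T1 <= t -> ipX (x t) (x t) + ipY (lam t) (lam t) <= B.
Proof.
set c := (ipX xs xs + ipY ls ls) / 2.
set phi := fun t => (ipX (x t - xs) (x t - xs) + ipY (lam t - ls) (lam t - ls)) / 2 - c.
set dphi := fun t => (ipX (derive1 x t) (x t - xs) + ipY (derive1 lam t) (lam t - ls)).
have D t : T1 <= t -> is_derive t 1 phi (dphi t).
  move=> tT; have t0t : t0 <= t by apply: ltW; apply: lt_le_trans tT.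
  apply: is_derive_eq.
    rewrite /phi; apply: isd_subc.
    apply: isd_mulc; apply: isd_add.
      by apply: (is_derive_ip2 HX); apply: isd_subc; apply: isd_x.
    by apply: (is_derive_ip2 HY); apply: isd_subc; apply: isd_l.
  by rewrite /= /dphi (ipC HX (x t - xs) (derive1 x t)) (ipC HY (lam t - ls) (derive1 lam t)); field.
have Dr t : T1 <= t -> is_derive t 1 rh (eps t).
  by move=> tT; apply: rho_der; apply: lt_le_trans tT.
have I t : T1 <= t -> dphi t <= - (eps t * phi t).
  move=> tT; have t0t : t0 <= t by apply: ltW; apply: lt_le_trans tT.
  rewrite /dphi (Lx t0t) (Ll t0t) /phi /c -mulNr.
  apply: (bnd_ineq HX HY Hc Hg Hadj) => //.
  exact: ltW (Heps t0t).
have Cm := comparison D Dr I.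
set K := `|phi T1|.
have Pt t : T1 <= t -> phi t <= K.
  move=> tT; have := Cm t tT.
  have e1 := expR_gt0 (rh T1); have et := expR_gt0 (rh t).
  have m : expR (rh T1) <= expR (rh t) by rewrite ler_expR; apply: rho_mono.
  have k1 : phi T1 <= K by exact: ler_norm.
  have k0 : 0 <= K by exact: normr_ge0.
  move=> H.
  have H2 : phi T1 * expR (rh T1) <= K * expR (rh t).
    apply: le_trans (_ : K * expR (rh T1) <= _).
      by apply: ler_wpM2r => //; exact: ltW.
    by apply: ler_wpM2l.
  have H3 : phi t * expR (rh t) <= K * expR (rh t) by apply: le_trans H H2.
  by rewrite -(ler_pM2r et).
exists (2 * (2 * (K + c)) + 2 * (ipX xs xs + ipY ls ls)) => t tT.
have P := Pt t tT; rewrite /phi in P.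
set a := x t - xs in P; set d := lam t - ls in P.
have q1 := ip_le HX a xs.
have q2 := ip_le HY d ls.
rewrite -!(ipxx HX) -!(ipxx HY) in q1 q2.
have ex : ipX (x t) (x t) = ipX a a + 2 * ipX a xs + ipX xs xs.
  by rewrite -(ip_split HX) /a subrK.
have el : ipY (lam t) (lam t) = ipY d d + 2 * ipY d ls + ipY ls ls.
  by rewrite -(ip_split HY) /d subrK.
rewrite ex el; rewrite /c in P *.
lra.
Qed.

Lemma mono_deriv (F dF : R -> R) (s : R) :
  (forall u, s <= u -> is_derive u 1 F (dF u)) -> (forall u, s <= u -> 0 <= dF u) ->
  forall a c, s <= a -> a <= c -> F a <= F c.
Proof.
move=> D P a c sa ac.
apply: (@ger0_derive1_ndecr R F a c _ _ _ a c) => //.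
- move=> u; rewrite in_itv /= => /andP[au _].
  by have := D u (le_trans sa (ltW au)).
- move=> u; rewrite in_itv /= => /andP[au _].
  have Du := D u (le_trans sa (ltW au)).
  rewrite derive1E derive_val; exact: P (le_trans sa (ltW au)).
- apply: continuous_in_subspaceT => u; rewrite inE /= in_itv /= => /andP[au _].
  apply: derivable_contR.
  by have := D u (le_trans sa au).
Qed.

Definition Nf s := ipX (x s) (x s) + ipY (lam s) (lam s).
Definition Pf s := \int[lebesgue_measure]_(u in `[t0, s]) Nf u.

Lemma Nf_der s : t0 <= s ->
  is_derive s 1 Nf (ipX (derive1 x s) (x s) + ipX (x s) (derive1 x s)
                   + (ipY (derive1 lam s) (lam s) + ipY (lam s) (derive1 lam s))).
Proof.
move=> s0; apply: isd_add.
- by apply: (is_derive_ip2 HX); apply: isd_x.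
- by apply: (is_derive_ip2 HY); apply: isd_l.
Qed.

Lemma Pf_der s : t0 < s -> is_derive s 1 Pf (Nf s).
Proof.
move=> s0; apply: FTC_at => // u u0.
apply: derivable_contR.
by have := Nf_der u0.
Qed.

Lemma Nf_ge0 s : 0 <= Nf s.
Proof. by apply: addr_ge0; apply: ip_ge0. Qed.

Definition Sf h t := ipX (x (t + h) - x t) (x (t + h) - x t)
                   + ipY (lam (t + h) - lam t) (lam (t + h) - lam t).
Definition Eh h t := Sf h t * (h^-1 * h^-1 / 2)
   + ((eps (t + h) - eps t) * h^-1) * ((Pf (t + h) - Pf t) * h^-1) / 2.

Lemma g_mono a c : tplus <= a -> a <= c ->
  eps c ^+ 2 + derive1 eps c <= eps a ^+ 2 + derive1 eps a.
Proof.
move=> pa ac.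
rewrite -lerN2.
apply: (@mono_deriv (fun s => - (eps s ^+ 2 + derive1 eps s))
   (fun s => - (eps s * derive1 eps s + eps s * derive1 eps s + derive1 (derive1 eps) s)) tplus) => //.
- move=> u pu; have u0 : t0 <= u by exact: le_trans pu.
  apply: is_deriveN; apply: isd_add; last exact: isd_of (Hdde u0).
  exact: (isd_mul (isd_of (Hde u0)) (isd_of (Hde u0))).
- move=> u pu; have H := Hc2 pu.
  change (derive1n 2 eps u) with (derive1 (derive1 eps) u) in H; lra.
Qed.

Lemma main_h h : 0 < h -> forall t, T1 <= t ->
  Eh h t * expR (rh t + rh (t + h)) <= Eh h T1 * expR (rh T1 + rh (T1 + h)).
Proof.
move=> h0.
have T1h u : T1 <= u -> t0 <= u + h.
  by move=> uT; apply: ltW; apply: (lt_le_trans t0T1); apply: (le_trans uT); rewrite lerDl ltW.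
have T1u u : T1 <= u -> t0 <= u by move=> uT; apply: ltW; apply: lt_le_trans uT.
set hi := h^-1.
have hi0 : 0 < hi by rewrite /hi invr_gt0.
set DE := fun u =>
  (ipX (derive1 x (u + h) - derive1 x u) (x (u + h) - x u)
   + ipX (x (u + h) - x u) (derive1 x (u + h) - derive1 x u)
   + (ipY (derive1 lam (u + h) - derive1 lam u) (lam (u + h) - lam u)
   + ipY (lam (u + h) - lam u) (derive1 lam (u + h) - derive1 lam u))) * (hi * hi / 2)
  + ((eps (u + h) - eps u) * hi * ((Nf (u + h) - Nf u) * hi)
     + (Pf (u + h) - Pf u) * hi * ((derive1 eps (u + h) - derive1 eps u) * hi)) / 2.
have D u : T1 <= u -> is_derive u 1 (Eh h) (DE u).
  move=> uT; have u0 := T1u u uT; have uh0 := T1h u uT.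
  have uh1 : t0 < u + h by apply: (lt_le_trans t0T1); apply: (le_trans uT); rewrite lerDl ltW.
  have u1 : t0 < u by apply: lt_le_trans uT.
  rewrite /Eh /Sf.
  apply: isd_add.
    apply: isd_mulc; apply: isd_add.
      by apply: (is_derive_ip2 HX); (apply: isd_sub;
        [apply: is_derive_shiftc; apply: isd_x | apply: isd_x]).
    by apply: (is_derive_ip2 HY); (apply: isd_sub;
      [apply: is_derive_shiftc; apply: isd_l | apply: isd_l]).
  apply: isd_mulc; apply: isd_mul.
    apply: isd_mulc; apply: isd_sub;
      [apply: is_derive_shiftc; exact: isd_of (Hde uh0) | exact: isd_of (Hde u0)].
  apply: isd_mulc; apply: isd_sub;
    [apply: is_derive_shiftc; exact: Pf_der | exact: Pf_der].
have Da u : T1 <= u -> is_derive u 1 (fun s => rh s + rh (s + h)) (eps u + eps (u + h)).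
  move=> uT; apply: isd_add.
    by apply: rho_der; apply: lt_le_trans uT.
  apply: is_derive_shiftc; apply: rho_der.
  by apply: (lt_le_trans t0T1); apply: (le_trans uT); rewrite lerDl ltW.
have I u : T1 <= u -> DE u <= - ((eps u + eps (u + h)) * Eh h u).
  move=> uT; have u0 := T1u u uT; have uh0 := T1h u uT.
  have Kq := key HX HY Hc Hg Hadj b (x u) (x (u + h)) (lam u) (lam (u + h)) (eps u) (eps (u + h)).
  rewrite -(Lx u0) -(Lx uh0) -(Ll u0) -(Ll uh0) in Kq.
  have tpu : tplus <= u by apply: le_trans uT; rewrite lerDl.
  have gm := g_mono tpu (_ : u <= u + h).
  have {}gm := gm (ltac:(by rewrite lerDl ltW)).
  have Mp : Pf u <= Pf (u + h).
    apply: (@mono_deriv Pf Nf T1) => //; last by rewrite lerDl ltW.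
      by move=> v vT; apply: Pf_der; apply: lt_le_trans vT.
    by move=> *; exact: Nf_ge0.
  have Q1 := ler_wpM2l (ltW (mulr_gt0 hi0 hi0)) Kq.
  have Q2' : (derive1 eps (u + h) - derive1 eps u) * hi <= (eps u ^+ 2 - eps (u + h) ^+ 2) * hi.
    apply: ler_wpM2r; [exact: ltW | idtac].
    move: gm; set p1 := derive1 eps (u + h); set p0 := derive1 eps u.
    set q1 := eps (u + h) ^+ 2; set q0 := eps u ^+ 2.
    move=> gm; lra.
  have Mp' : 0 <= (Pf (u + h) - Pf u) * hi by apply: mulr_ge0; [lra | exact: ltW].
  have Q2 := ler_wpM2l Mp' Q2'.
  rewrite /DE /Eh /Sf /Nf.
  rewrite (ipC HX (x (u + h) - x u)) (ipC HY (lam (u + h) - lam u)).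
  rewrite /Nf in Q2.
  rewrite !expr2 in Q2.
  rewrite /hi in Q1 Q2 *. lra.
move=> t tT.
exact: (comparison D Da I tT).
Qed.

Lemma shift_eq (h t : R) : h *: (1:R) + t = t + h.
Proof. by rewrite -[h *: 1]/(h * 1) mulr1 addrC. Qed.

Lemma dq_cvgV {W : normedModType R} (g : R -> W) t : derivable g t 1 ->
  (fun h : R => h^-1 *: (g (t + h) - g t)) @ 0^' --> derive1 g t.
Proof.
move=> dg; have := derivable_cvg dg.
by under eq_fun do rewrite shift_eq.
Qed.

Lemma dq_cvgR (g : R -> R) t : derivable g t 1 ->
  (fun h : R => (g (t + h) - g t) * h^-1) @ 0^' --> derive1 g t.
Proof.
move=> dg; have := dq_cvgV dg.
by under eq_fun do rewrite -[_ *: _]/(_ * _) mulrC.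
Qed.

Lemma shift_cont (g : R -> R) t : derivable g t 1 -> (fun h : R => g (t + h)) @ 0^' --> g t.
Proof.
move=> dg; have := derivable_cont dg.
by under eq_fun do rewrite shift_eq.
Qed.

Definition E0 t := (ipX (derive1 x t) (derive1 x t) + ipY (derive1 lam t) (derive1 lam t)) / 2
   + derive1 eps t * Nf t / 2.

Lemma Eh_cvg t : T1 <= t -> (fun h => Eh h t) @ 0^' --> E0 t.
Proof.
move=> tT; have t0t : t0 < t by apply: lt_le_trans tT.
have E : (fun h => Eh h t) = (fun h =>
   (ipX (h^-1 *: (x (t + h) - x t)) (h^-1 *: (x (t + h) - x t))
    + ipY (h^-1 *: (lam (t + h) - lam t)) (h^-1 *: (lam (t + h) - lam t))) / 2
   + ((eps (t + h) - eps t) * h^-1) * ((Pf (t + h) - Pf t) * h^-1) / 2).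
  apply/funext => h; rewrite /Eh /Sf !(ipZl HX, ipZr HX, ipZl HY, ipZr HY).
  by ring.
rewrite E /E0.
have dP : derivable Pf t 1 by have := Pf_der t0t.
have dPv : derive1 Pf t = Nf t.
  by rewrite derive1E; have D := Pf_der t0t; rewrite derive_val.
apply: cvgD.
  apply: cvgM; last exact: cvg_cst.
  apply: cvgD.
    by apply: (cvg_ip HX); apply: dq_cvgV; apply: Hdx; exact: ltW.
  by apply: (cvg_ip HY); apply: dq_cvgV; apply: Hdl; exact: ltW.
apply: cvgM; last exact: cvg_cst.
apply: cvgM; first by apply: dq_cvgR; apply: Hde; exact: ltW.
by rewrite -dPv; apply: dq_cvgR.
Qed.

Lemma E0_bound t : T1 <= t -> E0 t * expR (rh t + rh t) <= E0 T1 * expR (rh T1 + rh T1).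
Proof.
move=> tT.
have L s : T1 <= s -> (fun h => Eh h s * expR (rh s + rh (s + h))) @ 0^' --> E0 s * expR (rh s + rh s).
  move=> sT; have s0 : t0 < s by apply: lt_le_trans sT.
  apply: cvgM; first exact: Eh_cvg.
  have C1 : (fun h => rh s + rh (s + h)) @ 0^' --> rh s + rh s.
    apply: cvgD; first exact: cvg_cst.
    apply: shift_cont.
    by have := rho_der s0.
  exact: (cvg_comp _ _ C1 (@continuous_expR R _)).
apply: (ler_cvg_to (cvg_dnbhs_right (L t tT)) (cvg_dnbhs_right (L T1 (lexx _)))).
near=> h.
have h0 : 0 < h by near: h; exact: nbhs_right_gt.
exact: main_h.
Unshelve. all: by end_near.
Qed.

Lemma final : (fun t => `|(derive1 x) t| ^+ 2 + `|(derive1 lam) t| ^+ 2)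
    =O_ (pinfty_filter R)
  (fun t => expR (- 2 * rho eps t0 t) + eps t ^+ 2).
Proof.
have [B HB] := bounded.
set C := E0 T1 * expR (rh T1 + rh T1).
set K := 2 * `|C| + `|B| + 1.
have K0 : 0 < K.
  rewrite /K; have := normr_ge0 C; have := normr_ge0 B; move=> ? ?; lra.
apply/eqO_exP; exists K => //.
exists T1; split; first exact: num_real.
move=> t tT; have tT' := ltW tT.
have t0t : t0 <= t by apply: ltW; apply: lt_le_trans tT'.
have tpt : tplus <= t by apply: le_trans tT'; rewrite lerDl.
have E0b := E0_bound tT'.
set ex := expR (- 2 * rho eps t0 t).
have ex0 : 0 < ex by exact: expR_gt0.
have Et : 0 < expR (rh t + rh t) by exact: expR_gt0.
have exE : ex = (expR (rh t + rh t))^-1.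
  by rewrite /ex -expRN; congr expR; rewrite /rh; ring.
have E1 : E0 t <= C * ex by rewrite exE ler_pdivlMr.
have N0 := Nf_ge0 t.
have NB : Nf t <= `|B| by apply: le_trans (HB t tT') _; exact: ler_norm.
have c1 := Hc1 tpt.
have nB := normr_ge0 B; have nC := normr_ge0 C.
have e2 : 0 <= eps t ^+ 2 by exact: sqr_ge0.
have p1 : C * ex <= `|C| * ex by apply: ler_wpM2r; [exact: ltW | exact: ler_norm].
have p2 : - derive1 eps t * Nf t <= eps t ^+ 2 * Nf t by apply: ler_wpM2r => //; lra.
have p3 : eps t ^+ 2 * Nf t <= eps t ^+ 2 * `|B| by apply: ler_wpM2l.
have p4 : 2 * `|C| * ex <= K * ex by apply: ler_wpM2r; [exact: ltW | rewrite /K; lra].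
have p5 : `|B| * eps t ^+ 2 <= K * eps t ^+ 2 by apply: ler_wpM2r => //; rewrite /K; lra.
have S0 : 0 <= `|(derive1 x) t| ^+ 2 + `|(derive1 lam) t| ^+ 2 by apply: addr_ge0; exact: sqr_ge0.
have G0 : 0 <= ex + eps t ^+ 2 by apply: addr_ge0 => //; exact: ltW.
rewrite (ger0_norm S0) (ger0_norm G0).
rewrite /E0 in E1.
rewrite -!(ipxx HX) -!(ipxx HY).
lra.
Qed.

End Main.


Unset Implicit Arguments.

Theorem proposition4p2 (R : realType)
  (X Y : completeNormedModType R) (ipX : X -> X -> R) (ipY : Y -> Y -> R)
  (f : X -> R) (gradf : X -> X) (A : {linear X -> Y}) (Astar : Y -> X) (b : Y)
  (eps : R -> R) (t0 : R)
  (x : R -> X) (lam : R -> Y) (tplus : R) :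
  is_inner_product ipX -> is_inner_product ipY ->
  (* standing assumptions on f *)
  convex_fun f -> is_gradient ipX f gradf -> continuous gradf ->
  lipschitz_on_bounded gradf ->
  (* A linear continuous, Astar its adjoint *)
  continuous A -> (forall (u : X) (v : Y), ipY (A u) v = ipX u (Astar v)) ->
  (* standing assumptions on eps *)
  0 <= t0 ->
  (forall t, t0 <= t -> 0 < eps t) ->
  (forall t, t0 <= t -> derivable eps t 1) ->
  (forall t, t0 <= t -> derivable (derive1 eps) t 1) ->
  (forall t, t0 <= t -> {for t, continuous (derive1n 2 eps)}) ->
  eps t @[t --> +oo] --> 0 ->
  (* S x M nonempty *)
  (exists (xs : X) (ls : Y), saddle_point ipY f A b xs ls) ->
  (* (x, lam) is a C^1 solution of (AHT) on [t0, +oo[ *)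
  (forall t, t0 <= t -> derivable x t 1) ->
  (forall t, t0 <= t -> derivable lam t 1) ->
  (forall t, t0 <= t -> {for t, continuous (derive1 x)}) ->
  (forall t, t0 <= t -> {for t, continuous (derive1 lam)}) ->
  (forall t, t0 <= t ->
     (derive1 x) t + gradf (x t) + Astar (lam t) + eps t *: x t = 0) ->
  (forall t, t0 <= t ->
     (derive1 lam) t + b - A (x t) + eps t *: lam t = 0) ->
  (* conditions on eps after tplus *)
  t0 <= tplus ->
  (forall t, tplus <= t -> eps t ^+ 2 + (derive1 eps) t >= 0) ->
  (forall t, tplus <= t -> 2 * eps t * (derive1 eps) t + (derive1n 2 eps) t <= 0) ->
  (fun t => `|(derive1 x) t| ^+ 2 + `|(derive1 lam) t| ^+ 2)
    =O_ (pinfty_filter R)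
  (fun t => expR (- 2 * rho eps t0 t) + eps t ^+ 2).
Proof.
move=> HX HY Hc Hg _ _ _ Hadj _ Heps Hde Hdde _ _ [xs [ls Hsad]] Hdx Hdl _ _ Ex El Htp Hc1 Hc2.
exact: (final HX HY Hc Hg Hadj Hsad Heps Hde Hdde Hdx Hdl Ex El Htp Hc1 Hc2).
Qed.
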